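(* Let $\gamma\in(0,1)$. There is a constant $c_1>0$, a polynomial in $\|D_x\|_\infty,\|D_u\|_\infty,\kappa,\kappa_B,\gamma^{-1},\bar w$ (independent of $n,m,H,t$), such that with $\epsilon_1(H)=c_1n\sqrt mH(1-\gamma)^H$ the following holds. Suppose the disturbance-action policy is implemented with time-varying parameters $\bm M_k\in\mathcal M$ for all $k$, and $H\ge\frac{\log(2\kappa^2)}{\log((1-\gamma)^{-1})}$. Then for every $t$, $$\max_{\|w_k\|_\infty\le\bar w}\|D_xA_{\mathbb K}^Hx_{t-H}\|_\infty\le\epsilon_1(H),\qquad\max_{\|w_k\|_\infty\le\bar w}\|D_u\mathbb KA_{\mathbb K}^Hx_{t-H}\|_\infty\le\epsilon_1(H),$$ where the maxima are over all disturbance sequences with $\|w_k\|_\infty\le\bar w$ for all $k$.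
   Context: System $x_{t+1}=Ax_t+Bu_t+w_t$, $A\in\mathbb R^{n\times n}$, $B\in\mathbb R^{n\times m}$, $x_0=0$, and $x_s=0$ for $s<0$. $D_x\in\mathbb R^{k_x\times n}$, $D_u\in\mathbb R^{k_u\times m}$; for matrices $\|\cdot\|_\infty$ is the max absolute row sum and $\|\cdot\|_2$ the spectral norm. $\bar w>0$. For $\kappa\ge1$, $\gamma\in(0,1]$, $K$ is $(\kappa,\gamma)$-strongly stable if $A-BK=Q^{-1}LQ$ with $\|L\|_2\le1-\gamma$ and $\max(\|Q\|_2,\|Q^{-1}\|_2,\|K\|_2)\le\kappa$. $\kappa_B=\max(\|B\|_2,1)$. Fix a $(\kappa,\gamma)$-strongly stable $\mathbb K$ and set $A_{\mathbb K}=A-B\mathbb K$. A parameter is a list $\bm M=(M^{[1]},\dots,M^{[H]})$, $M^{[i]}\in\mathbb R^{m\times n}$; implementing parameters $\bm M_t$ means $u_t=-\mathbb Kx_t+\sum_{i=1}^HM_t^{[i]}w_{t-i}$, with $w_s=0$ for $s<0$. $\mathcal M=\{\bm M:\|M^{[i]}\|_\infty\le2\sqrt n\kappa^3(1-\gamma)^{i-1},\ 1\le i\le H\}$. *)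

(* Defs.v *)
From HB Require Import structures.
From mathcomp Require Import all_boot all_order all_algebra.
From mathcomp Require Import all_classical all_reals all_analysis.
Set Implicit Arguments. Unset Strict Implicit. Unset Printing Implicit Defensive.
Import Order.TTheory GRing.Theory Num.Theory.
Local Open Scope classical_set_scope.
Local Open Scope ring_scope.

Section Defs.
Variable R : realType.

(* max absolute row sum (for column vectors: max absolute entry) *)
Definition infnorm (p q : nat) (A : 'M[R]_(p, q)) : R :=
  \big[Num.max/0]_(i < p) \sum_(j < q) `|A i j|.

Definition norm2 (q : nat) (x : 'cV[R]_q) : R :=
  Num.sqrt (\sum_(j < q) (x j 0) ^+ 2).

Definition specnorm (p q : nat) (A : 'M[R]_(p, q)) : R :=
  sup [set norm2 (A *m x) | x in [set x : 'cV[R]_q | norm2 x <= 1]].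

Definition strongly_stable (n m : nat) (A : 'M[R]_n) (B : 'M[R]_(n, m))
  (K : 'M[R]_(m, n)) (kappa gamma : R) : Prop :=
  exists (Q L : 'M[R]_n),
    [/\ Q \in unitmx, A - B *m K = invmx Q *m L *m Q & specnorm L <= 1 - gamma] /\
    [/\ specnorm Q <= kappa, specnorm (invmx Q) <= kappa & specnorm K <= kappa].

Definition kappaB (n m : nat) (B : 'M[R]_(n, m)) : R := Num.max (specnorm B) 1.

Definition wpast (n : nat) (w : nat -> 'cV[R]_n) (t i : nat) : 'cV[R]_n :=
  if (i <= t)%N then w (t - i)%N else 0.

(* disturbance-action control: u_t = -K x_t + sum_{i=1}^H M_t^[i] w_{t-i};
   M t i is M_t^[i] (only 1 <= i <= H is used) *)
Definition dac_input (n m H : nat) (K : 'M[R]_(m, n)) (M : nat -> nat -> 'M[R]_(m, n))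
  (w : nat -> 'cV[R]_n) (t : nat) (xt : 'cV[R]_n) : 'cV[R]_m :=
  - (K *m xt) + \sum_(1 <= i < H.+1) M t i *m wpast w t i.

Fixpoint state (n m H : nat) (A : 'M[R]_n) (B : 'M[R]_(n, m)) (K : 'M[R]_(m, n))
  (M : nat -> nat -> 'M[R]_(m, n)) (w : nat -> 'cV[R]_n) (t : nat) : 'cV[R]_n :=
  match t with
  | 0 => 0
  | t'.+1 => let xt := state H A B K M w t' in
             A *m xt + B *m dac_input H K M w t' xt + w t'
  end.

Definition in_Mset (n m H : nat) (kappa gamma : R) (Mt : nat -> 'M[R]_(m, n)) : Prop :=
  forall i : nat, (1 <= i <= H)%N ->
    infnorm (Mt i) <= 2 * Num.sqrt n%:R * kappa ^+ 3 * (1 - gamma) ^+ (i.-1).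

(* Multivariate polynomials in 6 real variables with real coefficients:
   a finite list of monomials (coefficient, exponent vector). *)
Definition poly6 := seq (R * {ffun 'I_6 -> nat}).
Definition peval6 (p : poly6) (v : 'I_6 -> R) : R :=
  \sum_(mo <- p) mo.1 * \prod_(i < 6) v i ^+ mo.2 i.

End Defs.

(* Main.v *)
Require Import Defs.
From HB Require Import structures.
From mathcomp Require Import all_boot all_order all_algebra.
From mathcomp Require Import all_classical all_reals all_analysis.
From mathcomp Require Import ring lra.
Import Order.TTheory GRing.Theory Num.Theory.
Local Open Scope ring_scope.

Module Aux.
Set Implicit Arguments. Unset Strict Implicit.

Section Aux.
Variable R : realType.

Lemma norm2_ge0 q (x : 'cV[R]_q) : 0 <= norm2 x.
Proof. exact: sqrtr_ge0. Qed.

Lemma sumsq_ge0 q (x : 'cV[R]_q) : 0 <= \sum_(j < q) x j 0 ^+ 2.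
Proof. by apply: sumr_ge0 => j _; exact: sqr_ge0. Qed.

Lemma norm2_sq q (x : 'cV[R]_q) : norm2 x ^+ 2 = \sum_(j < q) x j 0 ^+ 2.
Proof. by rewrite /norm2 sqr_sqrtr // sumsq_ge0. Qed.

Lemma norm2_leP q (x : 'cV[R]_q) c : 0 <= c ->
  \sum_(j < q) x j 0 ^+ 2 <= c ^+ 2 -> norm2 x <= c.
Proof.
move=> c0 h; rewrite /norm2 -(ger0_norm c0) -sqrtr_sqr.
by rewrite ler_sqrt // sqr_ge0.
Qed.

Lemma entry_le_norm2 q (x : 'cV[R]_q) j : `|x j 0| <= norm2 x.
Proof.
rewrite -sqrtr_sqr /norm2 ler_sqrt ?sumsq_ge0 //.
rewrite (bigD1 j) //= lerDl; apply: sumr_ge0 => i _; exact: sqr_ge0.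
Qed.

Lemma norm2_bound q (x : 'cV[R]_q) c : 0 <= c ->
  (forall j, `|x j 0| <= c) -> norm2 x <= Num.sqrt q%:R * c.
Proof.
move=> c0 h; apply: norm2_leP; first by rewrite mulr_ge0 ?sqrtr_ge0.
rewrite exprMn sqr_sqrtr ?ler0n //.
apply: (@le_trans _ _ (\sum_(j < q) c ^+ 2)).
  apply: ler_sum => j _; rewrite -real_normK ?num_real //.
  by rewrite lerXn2r ?nnegrE ?normr_ge0.
by rewrite sumr_const card_ord mulr_natl.
Qed.

Lemma norm2Z q (x : 'cV[R]_q) a : norm2 (a *: x) = `|a| * norm2 x.
Proof.
rewrite /norm2 -sqrtr_sqr -sqrtrM ?sqr_ge0 // mulr_sumr.
by congr Num.sqrt; apply: eq_bigr => j _; rewrite mxE exprMn.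
Qed.

Lemma norm2_0 q : norm2 (0 : 'cV[R]_q) = 0.
Proof.
by rewrite -(scale0r (0 : 'cV[R]_q)) norm2Z normr0 mul0r.
Qed.

Lemma norm2D q (x y : 'cV[R]_q) : norm2 (x + y) <= norm2 x + norm2 y.
Proof.
set a := \sum_(j < q) x j 0 ^+ 2; set b := \sum_(j < q) y j 0 ^+ 2.
set c := \sum_(j < q) x j 0 * y j 0.
have a0 : 0 <= a by apply: sumsq_ge0.
have b0 : 0 <= b by apply: sumsq_ge0.
have key : forall s, 0 <= s -> 2 * s * c <= s ^+ 2 * a + b.
  move=> s s0; rewrite /a /b /c mulr_sumr mulr_sumr -big_split /=.
  apply: ler_sum => j _.
  have := sqr_ge0 (s * x j 0 - y j 0); lra.
have zc : forall (u v : 'cV[R]_q), norm2 u = 0 -> \sum_(j < q) u j 0 * v j 0 = 0.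
  move=> u v h; apply: big1 => j _.
  have : `|u j 0| <= 0 by rewrite -h entry_le_norm2.
  by rewrite normr_le0 => /eqP ->; rewrite mul0r.
have cs : c <= norm2 x * norm2 y.
  have [nx0|nxp] := eqVneq (norm2 x) 0.
    by rewrite /c zc // mulr_ge0 ?norm2_ge0.
  have [ny0|nyp] := eqVneq (norm2 y) 0.
    rewrite /c (eq_bigr (fun j => y j 0 * x j 0)) => [|j _]; last by rewrite mulrC.
    by rewrite zc // mulr_ge0 ?norm2_ge0.
  have nx : 0 < norm2 x by rewrite lt_def nxp norm2_ge0.
  have ny : 0 < norm2 y by rewrite lt_def nyp norm2_ge0.
  set s := norm2 y / norm2 x.
  have s0 : 0 < s by rewrite divr_gt0.
  have snx : s * norm2 x = norm2 y by rewrite /s divfK // gt_eqF.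
  have := key s (ltW s0).
  rewrite /a /b -!norm2_sq => h.
  have : s * c <= s * (norm2 x * norm2 y) by nra.
  by rewrite ler_pM2l.
apply: norm2_leP; first by rewrite addr_ge0 ?norm2_ge0.
rewrite sqrrD !norm2_sq.
apply: (@le_trans _ _ (a + 2 * c + b)).
  rewrite /a /b /c mulr_sumr -!big_split /=.
  by apply: ler_sum => j _; rewrite !mxE; lra.
rewrite -/a -/b; lra.
Qed.


Lemma infnorm_ge0 p q (A : 'M[R]_(p, q)) : 0 <= infnorm A.
Proof.
rewrite /infnorm; elim/big_ind: _ => //.
- by move=> u v hu hv; rewrite le_max hu.
- by move=> i _; apply: sumr_ge0 => j _; exact: normr_ge0.
Qed.

Lemma row_le_infnorm p q (A : 'M[R]_(p, q)) i :
  \sum_(j < q) `|A i j| <= infnorm A.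
Proof.
rewrite /infnorm (bigD1 i) //= le_max lexx //.
Qed.

Lemma infnorm_le p q (A : 'M[R]_(p, q)) c : 0 <= c ->
  (forall i, \sum_(j < q) `|A i j| <= c) -> infnorm A <= c.
Proof.
move=> c0 h; rewrite /infnorm; elim/big_ind: _ => //.
by move=> u v hu hv; rewrite ge_max hu hv.
Qed.

Lemma infnorm_colE q (x : 'cV[R]_q) i : \sum_(j < 1) `|x i j| = `|x i 0|.
Proof. by rewrite big_ord1. Qed.

Lemma entry_le_infnorm q (x : 'cV[R]_q) i : `|x i 0| <= infnorm x.
Proof. by rewrite -infnorm_colE row_le_infnorm. Qed.

Lemma infnorm_colP q (x : 'cV[R]_q) c : 0 <= c ->
  (forall i, `|x i 0| <= c) -> infnorm x <= c.
Proof. by move=> c0 h; apply: infnorm_le => // i; rewrite infnorm_colE. Qed.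

Lemma infnorm_mul p q (A : 'M[R]_(p, q)) (x : 'cV[R]_q) :
  infnorm (A *m x) <= infnorm A * infnorm x.
Proof.
apply: infnorm_colP; first by rewrite mulr_ge0 ?infnorm_ge0.
move=> i; rewrite mxE.
apply: (le_trans (ler_norm_sum _ _ _)).
apply: (@le_trans _ _ (\sum_(j < q) `|A i j| * infnorm x)).
  apply: ler_sum => j _; rewrite normrM ler_wpM2l ?normr_ge0 //.
  exact: entry_le_infnorm.
by rewrite -mulr_suml ler_wpM2r ?infnorm_ge0 ?row_le_infnorm.
Qed.

Lemma infnorm_le_norm2 q (x : 'cV[R]_q) : infnorm x <= norm2 x.
Proof. by apply: infnorm_colP; [exact: norm2_ge0| move=> i; exact: entry_le_norm2]. Qed.

Lemma norm2_mul p q (A : 'M[R]_(p, q)) (x : 'cV[R]_q) :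
  norm2 (A *m x) <= specnorm A * norm2 x.
Proof.
pose S := [set norm2 (A *m y) | y in [set y : 'cV[R]_q | norm2 y <= 1]]%classic.
have ub : has_ubound S.
  exists (Num.sqrt p%:R * infnorm A) => _ [y /= y1 <-].
  apply: norm2_bound; first exact: infnorm_ge0.
  move=> i; apply: (le_trans (entry_le_infnorm _ _)).
  apply: (le_trans (infnorm_mul _ _)).
  rewrite -[X in _ <= X]mulr1 ler_wpM2l ?infnorm_ge0 //.
  exact: (le_trans (infnorm_le_norm2 _) y1).
have [x0|xp] := eqVneq (norm2 x) 0.
  have -> : x = 0.
    apply/matrixP => i j; rewrite ord1 mxE; apply/eqP; rewrite -normr_le0.
    by rewrite -x0 entry_le_norm2.
  by rewrite mulmx0 norm2_0 norm2_0 mulr0.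
have nx : 0 < norm2 x by rewrite lt_def xp norm2_ge0.
pose y := (norm2 x)^-1 *: x.
have y1 : norm2 y <= 1.
  by rewrite /y norm2Z ger0_norm ?invr_ge0 ?norm2_ge0 // mulVf.
have : norm2 (A *m y) <= specnorm A.
  by apply: (ub_le_sup ub); exists y.
rewrite /y -scalemxAr norm2Z ger0_norm ?invr_ge0 ?norm2_ge0 //.
by move=> h; rewrite -ler_pdivrMr // mulrC.
Qed.

End Aux.

Definition mono (e : seq nat) : {ffun 'I_6 -> nat} := [ffun i : 'I_6 => nth 0%N e i].
Definition thepoly (R : realType) : poly6 R :=
  [:: (3%:R, mono [:: 1; 1; 6; 1; 1; 1]%N); (3%:R, mono [:: 1; 0; 6; 1; 1; 1]%N);
      (3%:R, mono [:: 0; 1; 6; 1; 1; 1]%N); (3%:R, mono [:: 0; 0; 6; 1; 1; 1]%N)].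

Lemma thepolyE (R : realType) (a b k kb g w : R) :
  peval6 (thepoly R) [ffun i : 'I_6 => [:: a; b; k; kb; g; w]`_i] =
  3 * (a + 1) * (b + 1) * k ^+ 6 * kb * g * w.
Proof.
rewrite /peval6 /thepoly !big_cons big_nil /=.
rewrite !big_ord_recl !big_ord0 /= !ffunE /= !expr0 !expr1 !mulr1 !mul1r; ring.
Qed.

Section Dyn.
Variable R : realType.

Lemma state_step n m H (A : 'M[R]_n) (B : 'M[R]_(n, m)) K M w t :
  state H A B K M w t.+1 = (A - B *m K) *m state H A B K M w t +
    (B *m (\sum_(1 <= i < H.+1) M t i *m wpast w t i) + w t).
Proof.
rewrite /= /dac_input mulmxDr mulmxN mulmxA mulmxBl.
by rewrite !addrA.
Qed.

Lemma QAK n (Q L : 'M[R]_n) : Q \in unitmx -> Q *m (invmx Q *m L *m Q) = L *m Q.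
Proof. by move=> hQ; rewrite !mulmxA mulmxV // mul1mx. Qed.

Lemma pow_bound n (Q L AK : 'M[R]_n) r : Q \in unitmx -> AK = invmx Q *m L *m Q ->
  specnorm L <= r -> 0 <= r -> forall k (y : 'cV[R]_n),
  norm2 (Q *m (AK ^+ k *m y)) <= r ^+ k * norm2 (Q *m y).
Proof.
move=> hQ hAK hL r0; elim=> [|k IH] y.
  by rewrite expr0 mul1r mul1mx.
rewrite exprS -mulmxE -mulmxA (mulmxA Q) hAK QAK // -mulmxA -hAK.
apply: (le_trans (norm2_mul _ _)).
apply: (@le_trans _ _ (r * norm2 (Q *m (AK ^+ k *m y)))).
  by rewrite ler_wpM2r ?norm2_ge0.
by rewrite exprS -mulrA ler_wpM2l.
Qed.

Lemma state_bound n m H (A : 'M[R]_n) (B : 'M[R]_(n, m)) K M w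
  (Q L : 'M[R]_n) gamma kappa c0 :
  Q \in unitmx -> A - B *m K = invmx Q *m L *m Q ->
  specnorm L <= 1 - gamma -> specnorm Q <= kappa -> 0 < gamma <= 1 -> 0 <= c0 -> 0 <= kappa ->
  (forall t, norm2 (B *m (\sum_(1 <= i < H.+1) M t i *m wpast w t i) + w t) <= c0) ->
  forall t, norm2 (Q *m state H A B K M w t) <= kappa * c0 / gamma.
Proof.
move=> hQ hAK hL hQn /andP[g0 g1] c00 k0 hd; elim=> [|t IH].
  by rewrite /= mulmx0 norm2_0 divr_ge0 ?mulr_ge0 ?(ltW g0).
rewrite state_step mulmxDr hAK mulmxA QAK // -mulmxA.
apply: (le_trans (norm2D _ _)).
have h1 : norm2 (L *m (Q *m state H A B K M w t)) <= (1 - gamma) * (kappa * c0 / gamma).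
  apply: (le_trans (norm2_mul _ _)).
  apply: (@le_trans _ _ ((1 - gamma) * norm2 (Q *m state H A B K M w t))).
    by rewrite ler_wpM2r ?norm2_ge0.
  by rewrite ler_wpM2l // subr_ge0.
have h2 : norm2 (Q *m (B *m (\sum_(1 <= i < H.+1) M t i *m wpast w t i) + w t)) <= kappa * c0.
  apply: (le_trans (norm2_mul _ _)).
  apply: (@le_trans _ _ (kappa * norm2 (B *m (\sum_(1 <= i < H.+1) M t i *m wpast w t i) + w t))).
    by rewrite ler_wpM2r ?norm2_ge0.
  by rewrite ler_wpM2l.
apply: (le_trans (lerD h1 h2)).
have -> : (1 - gamma) * (kappa * c0 / gamma) + kappa * c0 = kappa * c0 / gamma.
  by field; rewrite gt_eqF.
by [].
Qed.


Lemma dist_bound n m H (B : 'M[R]_(n, m)) (M : nat -> nat -> 'M[R]_(m, n)) w t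
  gamma kappa wbar :
  0 < gamma < 1 -> 1 <= kappa -> 0 < wbar -> (0 < m)%N -> (0 < H)%N ->
  (forall k, in_Mset H kappa gamma (M k)) ->
  (forall k, infnorm (w k) <= wbar) ->
  norm2 (B *m (\sum_(1 <= i < H.+1) M t i *m wpast w t i) + w t) <=
  H%:R * Num.sqrt n%:R * Num.sqrt m%:R * wbar * (3 * kappaB B * kappa ^+ 3).
Proof.
move=> /andP[g0 g1] k1 wb0 m0 H0 hM hw.
have sn0 : 0 <= Num.sqrt n%:R :> R by exact: sqrtr_ge0.
have k3 : 1 <= kappa ^+ 3 by exact: exprn_ege1.
have kB : 1 <= kappaB B by rewrite /kappaB le_max lexx orbT.
have sm1 : 1 <= Num.sqrt m%:R :> R.
  by rewrite -{1}sqrtr1 ler_sqrt ?ler0n // ler1n.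
have H1 : 1 <= H%:R :> R by rewrite ler1n.
set c := 2 * Num.sqrt n%:R * kappa ^+ 3 * wbar.
have k30 : 0 <= kappa ^+ 3 by lra.
have c0 : 0 <= c.
  rewrite /c; apply: mulr_ge0; [|lra]; apply: mulr_ge0 => //; apply: mulr_ge0 => //.
have hwp : forall i, infnorm (wpast w t i) <= wbar.
  move=> i; rewrite /wpast; case: ifP => _ //.
  apply: infnorm_colP => [|j]; first exact: ltW.
  by rewrite mxE normr0 ltW.
set v := \sum_(1 <= i < H.+1) M t i *m wpast w t i.
have hv : forall j, `|v j 0| <= H%:R * c.
  move=> j; rewrite /v summxE.
  apply: (le_trans (ler_norm_sum _ _ _)).
  apply: (@le_trans _ _ (\sum_(1 <= i < H.+1) c)); last first.
    by rewrite sumr_const_nat subn1 /= mulr_natl.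
  rewrite big_nat_cond [X in _ <= X]big_nat_cond.
  apply: ler_sum => i /andP[hi _].
  apply: (le_trans (entry_le_infnorm _ _)).
  apply: (le_trans (infnorm_mul _ _)).
  have hMi := hM t i; rewrite ltnS in hi; have {hMi} hMi := hMi hi.
  have hp : (1 - gamma) ^+ i.-1 <= 1 by rewrite exprn_ile1 //; lra.
  apply: ler_pM; rewrite ?infnorm_ge0 ?hwp //.
  apply: (le_trans hMi).
  rewrite -[X in _ <= X]mulr1 ler_wpM2l //.
  by apply: mulr_ge0 => //; apply: mulr_ge0.
have hnv : norm2 v <= Num.sqrt m%:R * (H%:R * c).
  apply: norm2_bound => //; apply: mulr_ge0 => //; lra.
have hBv : norm2 (B *m v) <= kappaB B * (Num.sqrt m%:R * (H%:R * c)).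
  apply: (le_trans (norm2_mul _ _)).
  apply: (@le_trans _ _ (kappaB B * norm2 v)).
    by rewrite ler_wpM2r ?norm2_ge0 // /kappaB le_max lexx.
  by rewrite ler_wpM2l //; lra.
have hwt : norm2 (w t) <= Num.sqrt n%:R * wbar.
  apply: norm2_bound; first exact: ltW.
  move=> j; exact: (le_trans (entry_le_infnorm _ _) (hw t)).
apply: (le_trans (norm2D _ _)).
apply: (le_trans (lerD hBv hwt)).
rewrite /c.
set X := kappaB B * kappa ^+ 3 * H%:R * Num.sqrt m%:R.
have X1 : 1 <= X.
  rewrite /X.
  have h1 : 1 <= kappaB B * kappa ^+ 3 by nra.
  have h2 : 1 <= kappaB B * kappa ^+ 3 * H%:R by nra.
  nra.
have e1 : kappaB B * (Num.sqrt m%:R * (H%:R * (2 * Num.sqrt n%:R * kappa ^+ 3 * wbar))) = 2 * X * (Num.sqrt n%:R * wbar) by rewrite /X; ring.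
have e2 : H%:R * Num.sqrt n%:R * Num.sqrt m%:R * wbar * (3 * kappaB B * kappa ^+ 3) = 3 * X * (Num.sqrt n%:R * wbar) by rewrite /X; ring.
rewrite e1 e2.
have : 0 <= Num.sqrt n%:R * wbar by apply: mulr_ge0 => //; lra.
nra.
Qed.

End Dyn.

End Aux.
Import Aux.

Theorem lemma1 (R : realType) :
  exists P : poly6 R,
  forall (gamma kappa wbar : R) (n m kx ku H : nat)
    (A : 'M[R]_n) (B : 'M[R]_(n, m)) (KK : 'M[R]_(m, n))
    (Dx : 'M[R]_(kx, n)) (Du : 'M[R]_(ku, m))
    (M : nat -> nat -> 'M[R]_(m, n)),
  0 < gamma < 1 -> 1 <= kappa -> 0 < wbar ->
  (0 < n)%N -> (0 < m)%N ->
  strongly_stable A B KK kappa gamma ->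
  let c1 := peval6 P [ffun i : 'I_6 =>
              [:: infnorm Dx; infnorm Du; kappa; kappaB B; gamma^-1; wbar]`_i] in
  let eps1 := c1 * n%:R * Num.sqrt m%:R * H%:R * (1 - gamma) ^+ H in
  0 < c1 /\
  ((forall k, in_Mset H kappa gamma (M k)) ->
   ln (2 * kappa ^+ 2) / ln ((1 - gamma)^-1) <= H%:R ->
   forall (t : nat) (w : nat -> 'cV[R]_n),
   (forall k, infnorm (w k) <= wbar) ->
   let AK := A - B *m KK in
   let x := state H A B KK M w (t - H)%N in
   infnorm (Dx *m (AK ^+ H *m x)) <= eps1 /\
   infnorm (Du *m (KK *m (AK ^+ H *m x))) <= eps1).
Proof.
exists (thepoly R).
move=> gamma kappa wbar n m kx ku H A B KK Dx Du M hg hk hw n0 m0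
  [Q [L [[hQ hAK hL] [hQn hQi hK]]]] c1 eps1.
set a := infnorm Dx; set b := infnorm Du.
have a0 : 0 <= a by apply: infnorm_ge0.
have b0 : 0 <= b by apply: infnorm_ge0.
have kB : 1 <= kappaB B by rewrite /kappaB le_max lexx orbT.
have [g0 g1] : 0 < gamma /\ gamma < 1 by case/andP: hg.
have gi0 : 0 < gamma^-1 by rewrite invr_gt0.
have k6 : 1 <= kappa ^+ 6 by exact: exprn_ege1.
have c1E : c1 = 3 * (a + 1) * (b + 1) * kappa ^+ 6 * kappaB B * gamma^-1 * wbar.
  by rewrite /c1 thepolyE.
split.
  rewrite c1E; apply: mulr_gt0 => //; apply: mulr_gt0 => //.
  apply: mulr_gt0; last lra; apply: mulr_gt0; last lra.
  apply: mulr_gt0; last lra; apply: mulr_gt0; lra.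
move=> hM hln t w hwk AK x.
have H0 : (0 < H)%N.
  rewrite lt0n; apply/negP => /eqP H0; rewrite H0 in hln.
  have l1 : 0 < ln (2 * kappa ^+ 2) by apply: ln_gt0; nra.
  have l2 : 0 < ln ((1 - gamma)^-1) by apply: ln_gt0; rewrite invf_gt1; lra.
  have := divr_gt0 l1 l2; by rewrite ltNge hln.
set c0 := H%:R * Num.sqrt n%:R * Num.sqrt m%:R * wbar * (3 * kappaB B * kappa ^+ 3).
have k0 : 0 <= kappa by lra.
have hx : norm2 (Q *m x) <= kappa * c0 / gamma.
  apply: (state_bound hQ hAK hL hQn).
  - by rewrite g0 (ltW g1).
  - rewrite /c0; apply: mulr_ge0; last (apply: mulr_ge0; [lra|exact: exprn_ge0]).
    by rewrite !mulr_ge0 ?sqrtr_ge0 ?ler0n // ltW.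
  - exact: k0.
  - move=> t'; have := (dist_bound B t' hg hk hw m0 H0 hM hwk); by rewrite /c0.
set y := AK ^+ H *m x.
have g10 : 0 <= 1 - gamma by lra.
have hy : norm2 y <= kappa * ((1 - gamma) ^+ H * (kappa * c0 / gamma)).
  have -> : y = invmx Q *m (Q *m y) by rewrite mulKmx.
  apply: (le_trans (norm2_mul _ _)).
  apply: (@le_trans _ _ (kappa * norm2 (Q *m y))).
    by rewrite ler_wpM2r ?norm2_ge0.
  rewrite ler_wpM2l //.
  apply: (le_trans (pow_bound hQ hAK hL g10 H x)).
  by rewrite ler_wpM2l ?exprn_ge0.
have sn : Num.sqrt n%:R <= n%:R :> R.
  have n1 : 1 <= n%:R :> R by rewrite ler1n.
  have s1 : 1 <= Num.sqrt n%:R :> R by rewrite -{1}sqrtr1 ler_sqrt ?ler0n.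
  have e : Num.sqrt n%:R * Num.sqrt n%:R = n%:R :> R.
    by rewrite -expr2 sqr_sqrtr ?ler0n.
  nra.
have sn0 : 0 <= Num.sqrt n%:R :> R by exact: sqrtr_ge0.
set F := 3 * kappaB B * gamma^-1 * wbar * Num.sqrt m%:R * H%:R * (1 - gamma) ^+ H.
have F0 : 0 <= F.
  rewrite /F !mulr_ge0 ?sqrtr_ge0 ?ler0n ?exprn_ge0 //; try lra.
have Y : kappa * ((1 - gamma) ^+ H * (kappa * c0 / gamma)) = F * (kappa ^+ 5 * Num.sqrt n%:R).
  by rewrite /F /c0; field; rewrite gt_eqF.
have E : eps1 = F * ((a + 1) * (b + 1) * kappa ^+ 6 * n%:R).
  by rewrite /eps1 c1E /F; ring.
have k50 : 0 <= kappa ^+ 5 by exact: exprn_ge0.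
have k5 : kappa ^+ 5 <= kappa ^+ 6 by rewrite [X in _ <= X]exprS; nra.
rewrite -/y; split.
  apply: (le_trans (infnorm_mul _ _)); rewrite -/a.
  apply: (@le_trans _ _ (a * norm2 y)).
    by rewrite ler_wpM2l // infnorm_le_norm2.
  apply: (le_trans (ler_wpM2l a0 hy)); rewrite Y E.
  have : a * (kappa ^+ 5 * Num.sqrt n%:R) <= (a + 1) * (b + 1) * kappa ^+ 6 * n%:R.
    have ab : a <= (a + 1) * (b + 1) by nra.
    rewrite mulrA; apply: ler_pM => //; first exact: mulr_ge0.
    exact: ler_pM.
  move=> h; rewrite mulrCA; apply: ler_wpM2l => //.
apply: (le_trans (infnorm_mul _ _)); rewrite -/b.
apply: (@le_trans _ _ (b * (kappa * norm2 y))).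
  rewrite ler_wpM2l //; apply: (le_trans (infnorm_le_norm2 _)).
  apply: (le_trans (norm2_mul _ _)).
  by rewrite ler_wpM2r ?norm2_ge0.
apply: (le_trans (ler_wpM2l b0 (ler_wpM2l k0 hy))); rewrite Y E.
have : b * (kappa * (kappa ^+ 5 * Num.sqrt n%:R)) <= (a + 1) * (b + 1) * kappa ^+ 6 * n%:R.
  have ab : b <= (a + 1) * (b + 1) by nra.
  have -> : b * (kappa * (kappa ^+ 5 * Num.sqrt n%:R)) = b * kappa ^+ 6 * Num.sqrt n%:R by ring.
  apply: ler_pM => //; first (apply: mulr_ge0 => //; exact: exprn_ge0).
  by apply: ler_pM => //; exact: exprn_ge0.
move=> h.
have -> : b * (kappa * (F * (kappa ^+ 5 * Num.sqrt n%:R))) = F * (b * (kappa * (kappa ^+ 5 * Num.sqrt n%:R))) by ring.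
by apply: ler_wpM2l.
Qed.
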